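(* Let $g$ be a generalized string over a finite alphabet $\Sigma$ and let $M_g=\mathrm{NFA}_\circlearrowleft(g)$. Then $\mathrm{SubsetConstruction}(M_g)$ is a minimal DFA.
   Context: For a finite alphabet $\Sigma$, the generalized alphabet is $\mathcal{G}_\Sigma=\mathcal{P}(\Sigma)\setminus\{\emptyset\}$; a generalized string $g=g[1]\cdots g[|g|]$ is a finite string over $\mathcal{G}_\Sigma$. $\mathrm{NFA}(g)=(Q,\Sigma,\Delta,Q_\alpha,F)$ with $Q=\{0,\dots,|g|\}$, $\Delta(q,\sigma)=\{q+1\}$ if $q<|g|$ and $\sigma\in g[q+1]$, and $\Delta(q,\sigma)=\emptyset$ otherwise; $Q_\alpha=\{0\}$, $F=\{|g|\}$. $\mathrm{NFA}_\circlearrowleft(g)=(Q,\Sigma,\Delta_\circlearrowleft,Q_\alpha,F)$ where $\Delta_\circlearrowleft(q,\sigma)=\{q\}\cup\Delta(q,\sigma)$ if $q\in Q_\alpha$ and $\Delta_\circlearrowleft(q,\sigma)=\Delta(q,\sigma)$ otherwise. For an NFA $(Q,\Sigma,\Delta,Q_\alpha,F)$, $\mathrm{SubsetConstruction}$ denotes the DFA whose states are the subsets $\hat\delta(Q_\alpha,s)\subseteq Q$, $s\in\Sigma^*$, with $\delta(Q',\sigma)=\bigcup_{q\in Q'}\Delta(q,\sigma)$ (extended to strings), start state $Q_\alpha$ and accepting states the subsets meeting $F$. A DFA is minimal if no DFA with fewer states recognizes the same language. *)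

(* Defs.v *)
From mathcomp Require Import all_boot.
Set Implicit Arguments. Unset Strict Implicit. Unset Printing Implicit Defensive.

Record dfa (Sigma : finType) := DFA {
  dstate : finType;
  dstart : dstate;
  dtrans : dstate -> Sigma -> dstate;
  dfinal : {set dstate} }.

Definition drun (Sigma : finType) (D : dfa Sigma) (q : dstate D) (w : seq Sigma) :=
  foldl (@dtrans _ D) q w.

Definition daccept (Sigma : finType) (D : dfa Sigma) (w : seq Sigma) : bool :=
  drun (dstart D) w \in dfinal D.

Definition minimal_dfa (Sigma : finType) (D : dfa Sigma) : Prop :=
  forall D' : dfa Sigma, (forall w, daccept D' w = daccept D w) ->
    #|dstate D| <= #|dstate D'|.

Record nfa (Sigma : finType) := NFA {
  nstate : finType;
  ntrans : nstate -> Sigma -> {set nstate};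
  nstart : {set nstate};
  nfinal : {set nstate} }.

Section Subset.
Variables (Sigma : finType) (N : nfa Sigma).

Definition nstep (X : {set nstate N}) (a : Sigma) : {set nstate N} :=
  \bigcup_(q in X) ntrans q a.

Definition ndeltahat (X : {set nstate N}) (w : seq Sigma) := foldl nstep X w.

Definition nstep_rel : rel {set nstate N} :=
  fun X Y => [exists a, Y == nstep X a].

Definition nreachable (X : {set nstate N}) : bool := connect nstep_rel (nstart N) X.

Lemma nreachableP X : reflect (exists w, X = ndeltahat (nstart N) w) (nreachable X).
Proof.
apply: (iffP connectP) => [[p Hp ->]|[w ->]].
  elim: p (nstart N) Hp => [|Y p IH] Z /=; first by exists [::].
  case/andP=> /existsP[a /eqP ->] /IH[w ->]; by exists (a :: w).
have H : forall Z, exists2 p, path nstep_rel Z p & ndeltahat Z w = last Z p.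
  elim: w => [|a w IH] Z /=; first by exists [::].
  have [q Hq Hl] := IH (nstep Z a).
  exists (nstep Z a :: q) => //=; rewrite Hq andbT; apply/existsP; by exists a.
exact: H.
Qed.

Definition sc_state : finType := {X : {set nstate N} | nreachable X}.

Lemma sc_start_proof : nreachable (nstart N).
Proof. exact: connect0. Qed.

Lemma sc_trans_proof (X : sc_state) (a : Sigma) : nreachable (nstep (val X) a).
Proof.
apply: connect_trans (valP X) _; apply: connect1; apply/existsP; by exists a.
Qed.

Definition subset_construction : dfa Sigma :=
  @DFA Sigma sc_state
    (exist _ (nstart N) sc_start_proof)
    (fun X a => exist _ (nstep (val X) a) (sc_trans_proof X a))
    [set X : sc_state | ~~ [disjoint val X & nfinal N]].

End Subset.

Definition gen_string (Sigma : finType) (g : seq {set Sigma}) : bool :=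
  all (fun A => A != set0) g.

(* Delta of NFA(g): q -> q+1 on sigma iff q < |g| and sigma in g[q+1]
   (g[q+1] 1-indexed = nth set0 g q 0-indexed). *)
Definition gtrans (Sigma : finType) (g : seq {set Sigma})
  (q : 'I_(size g).+1) (a : Sigma) : {set 'I_(size g).+1} :=
  if (q < size g) && (a \in nth set0 g q) then [set inord q.+1] else set0.

Definition nfa_of (Sigma : finType) (g : seq {set Sigma}) : nfa Sigma :=
  @NFA Sigma 'I_(size g).+1 (@gtrans Sigma g) [set ord0] [set ord_max].

Definition nfa_loop (Sigma : finType) (g : seq {set Sigma}) : nfa Sigma :=
  @NFA Sigma 'I_(size g).+1
    (fun q a => (if q \in [set ord0 : 'I_(size g).+1] then [set q] else set0)
                :|: @gtrans Sigma g q a)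
    [set ord0] [set ord_max].

(* Main.v *)
Require Import Defs.
From mathcomp Require Import all_boot.

Lemma nstep_loopP (Sigma : finType) (g : seq {set Sigma})
  (Y : {set 'I_(size g).+1}) (a : Sigma) (x : 'I_(size g).+1) :
  x \in nstep (N := nfa_loop g) Y a ->
  (val x = 0 /\ ord0 \in Y) \/ (exists2 y : 'I_(size g).+1, y \in Y & val x = (val y).+1).
Proof.
rewrite /nstep => /bigcupP [y Hy]; rewrite /= in_setU.
case/orP.
  case: ifP => H; last by rewrite in_set0.
  move: H; rewrite !in_set1 => /eqP E /eqP E2. subst. by left.
rewrite /gtrans; case: ifP => [/andP [Hlt _]|]; last by rewrite in_set0.
rewrite in_set1 => /eqP ->; right; exists y => //.
by rewrite /= inordK // ltnS.
Qed.
Arguments nstep_loopP {Sigma g Y a x}.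

Lemma nstep_loop0 (Sigma : finType) (g : seq {set Sigma})
  (Y : {set 'I_(size g).+1}) (a : Sigma) :
  ord0 \in Y -> ord0 \in nstep (N := nfa_loop g) Y a.
Proof.
move=> H; apply/bigcupP; exists ord0 => //=.
by rewrite in_setU !in_set1 eqxx.
Qed.
Arguments nstep_loop0 {Sigma g Y}.

Lemma nstep_loopS (Sigma : finType) (g : seq {set Sigma})
  (Y : {set 'I_(size g).+1}) (a : Sigma) (y : 'I_(size g).+1) :
  y \in Y -> y < size g -> a \in nth set0 g y ->
  inord (val y).+1 \in nstep (N := nfa_loop g) Y a.
Proof.
move=> Hy Hlt Ha; apply/bigcupP; exists y => //=.
by rewrite in_setU /gtrans Hlt Ha /= in_set1 [in X in _ || X]in_set1 eqxx orbT.
Qed.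
Arguments nstep_loopS {Sigma g Y a y}.

Lemma run_has0 (Sigma : finType) (g : seq {set Sigma}) w :
  forall Y : {set 'I_(size g).+1}, ord0 \in Y ->
  ord0 \in ndeltahat (N := nfa_loop g) Y w.
Proof.
elim: w => [|a w IH] Y H //=.
by apply: IH; apply: nstep_loop0.
Qed.

Lemma run_inv (Sigma : finType) (g : seq {set Sigma}) v :
  forall (Y : {set 'I_(size g).+1}) (k : 'I_(size g).+1),
  k \in ndeltahat (N := nfa_loop g) Y v ->
  (ord0 \in Y /\ val k <= size v) \/
  (exists2 j : 'I_(size g).+1, j \in Y & (0 < val j) && (val k == val j + size v)).
Proof.
elim: v => [|a v IH] Y k /=.
  move=> Hk; case: (posnP (val k)) => [E|P].
    left; rewrite E; split=> //.
    have -> : ord0 = k by apply: val_inj; rewrite /= E.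
    by [].
  by right; exists k => //; rewrite addn0 eqxx andbT.
case/IH => [[H0 Hk]|[j Hj /andP [Pj /eqP Ek]]].
  left; split; last by apply: leq_trans Hk _.
  case: (nstep_loopP H0) => [[_ //]|[y _ //]].
case: (nstep_loopP Hj) => [[E _]|[y Hy Ej]]; first by rewrite E in Pj.
case: (posnP (val y)) => [E|P].
  left; split; last by rewrite Ek Ej E.
  have -> : ord0 = y by apply: val_inj; rewrite /= E.
  by [].
right; exists y => //; rewrite P /= Ek Ej addSn addnS.
by [].
Qed.

Lemma exists_word (Sigma : finType) (g : seq {set Sigma}) (hg : gen_string g) k :
  forall i, i + k = size g -> exists v : seq Sigma, size v = k /\
  forall (Y : {set 'I_(size g).+1}) (x : 'I_(size g).+1), x \in Y -> val x = i ->
    ord_max \in ndeltahat (N := nfa_loop g) Y v.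
Proof.
elim: k => [|k IH] i Hi.
  exists [::]; split=> // Y x Hx Ex /=.
  have <- : x = ord_max by apply: val_inj; rewrite /= Ex -Hi addn0.
  by [].
have Hlt : i < size g by rewrite -Hi addnS ltnS leq_addr.
have Hi' : i.+1 + k = size g by rewrite addSnnS.
have [v [Hv Hv2]] := IH i.+1 Hi'.
have : nth set0 g i != set0 by apply: (all_nthP set0 hg).
case/set0Pn => a Ha.
exists (a :: v); split; first by rewrite /= Hv.
move=> Y x Hx Ex /=; apply: (Hv2 _ (inord i.+1)).
  by rewrite -Ex; apply: nstep_loopS => //; rewrite Ex.
by rewrite /= inordK // ltnS.
Qed.

Arguments exists_word {Sigma g} hg {k i}.

Lemma distinguish (Sigma : finType) (g : seq {set Sigma}) (hg : gen_string g)
  (X Y : {set 'I_(size g).+1}) (i : 'I_(size g).+1) :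
  ord0 \in Y -> i \in X -> i \notin Y ->
  exists v, (ord_max \in ndeltahat (N := nfa_loop g) X v) &&
            (ord_max \notin ndeltahat (N := nfa_loop g) Y v).
Proof.
move=> H0 HiX HiY.
have Hi : val i <= size g by rewrite -ltnS ltn_ord.
have Pi : 0 < val i.
  rewrite lt0n; apply/negP => /eqP E.
  have E' : i = ord0 by apply: val_inj.
  by rewrite E' H0 in HiY.
have [v [Hv Hv2]] := exists_word hg (subnKC Hi).
exists v; rewrite (Hv2 X i) //=; apply/negP => /run_inv.
case=> [[_]|[j Hj /andP [Pj /eqP E]]].
  rewrite Hv /= => H.
  have : size g - i < size g by rewrite ltn_subrL Pi (leq_trans Pi Hi).
  by rewrite ltnNge H.
move: E; rewrite Hv /= => E.
have Eij : val j = val i.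
  apply/eqP; rewrite -(eqn_add2r (size g - i)) -E subnKC //.
have : j = i by apply: val_inj.
by move=> Eji; rewrite -Eji Hj in HiY.
Qed.

Arguments distinguish {Sigma g} hg {X Y i}.

Lemma sc_run (Sigma : finType) (N : nfa Sigma) v :
  forall X : dstate (subset_construction N),
  val (drun X v) = ndeltahat (val X) v.
Proof. by elim: v => [|a v IH] X //=; rewrite /drun /= -/(drun _ _) IH. Qed.

Lemma drun_cat (Sigma : finType) (D : dfa Sigma) (q : dstate D) u v :
  drun q (u ++ v) = drun (drun q u) v.
Proof. by rewrite /drun foldl_cat. Qed.

Theorem mainTheorem4 (Sigma : finType) (g : seq {set Sigma}) (hg : gen_string g) :
  minimal_dfa (subset_construction (nfa_loop g)).
Proof.
move=> D' HD'.
set S := subset_construction (nfa_loop g).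
have wex : forall X : dstate S,
    exists w, val X == ndeltahat (N := nfa_loop g) [set ord0] w.
  move=> X; have /nreachableP [w Hw] := valP X.
  by exists w; apply/eqP.
pose w X := xchoose (wex X).
have Hw : forall X : dstate S, drun (dstart S) (w X) = X.
  move=> X; apply: val_inj; rewrite sc_run /=.
  by rewrite (eqP (xchooseP (wex X))).
have H0 : forall X : dstate S, ord0 \in val X.
  by move=> X; rewrite (eqP (xchooseP (wex X))); apply: run_has0; rewrite in_set1.
have Hacc : forall (X : dstate S) v,
    daccept S (w X ++ v) = (ord_max \in ndeltahat (N := nfa_loop g) (val X) v).
  move=> X v; rewrite /daccept drun_cat Hw.
  rewrite /S /= inE disjoint_sym disjoints1 negbK.
  by move: (@sc_run _ (nfa_loop g) v X) => /= ->.
pose f X := drun (dstart D') (w X).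
have finj : injective f.
  move=> X Y Hf; apply: val_inj.
  case: (pickP [pred i | (i \in val X) != (i \in val Y)]) => [i /= Hi|Hn].
    have key : forall X Y : dstate S, f X = f Y -> i \in val X -> i \notin val Y -> False.
      move=> X1 Y1 Hf1 HX HY.
      have [v /andP [Hv1 Hv2]] := distinguish hg (H0 Y1) HX HY.
      have E1 := HD' (w X1 ++ v); have E2 := HD' (w Y1 ++ v).
      rewrite !Hacc Hv1 in E1 E2; rewrite (negbTE Hv2) in E2.
      move: E1 E2; rewrite /daccept !drun_cat.
      by rewrite -/(f X1) -/(f Y1) Hf1 => ->.
    case: (boolP (i \in val X)) Hi => HX /=.
      move=> HY; exfalso; apply: (key X Y Hf HX) => /=.
      by move: HY; case: (i \in sval Y).
    move=> HY; exfalso; apply: (key Y X (esym Hf)) => //=.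
    by move: HY; case: (i \in sval Y).
  apply/setP => i; move: (Hn i) => /= /negbFE /eqP.
  by [].
by rewrite -(card_codom finj); apply: max_card.
Qed.
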